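(* Let $m\ge 2$ and $\alpha\in[0,1]$. Define $w_k$ and $t_k$ by the recursion given in the context. There exists a deterministic voting rule $f$ such that for every $k\in[m-1]$ and every election $\mathcal E=(N,A,\vec\sigma)$ with $m$ alternatives whose profile $\vec\sigma$ is moderate-up-to-$k$, $$\mathsf{dist}_\alpha(f(\vec\sigma),\mathcal E)\le 2+\max(\alpha,t_k).$$
   Context: An election $\mathcal E=(N,A,\vec\sigma)$ has a finite set $N$ of $n$ agents, a set $A$ of $m$ alternatives, and a profile $\vec\sigma=(\sigma_1,\dots,\sigma_n)$. Each $\sigma_i=(\pi_i,\Join_i)$ consists of a bijection $\pi_i:[m]\to A$, where $\pi_i(1)$ is agent $i$'s most preferred alternative, and a map $\Join_i:[m-1]\to\{\succ,\succ\!\!\succ\}$. A metric $d$ on $N\cup A$ is nonnegative and symmetric, satisfies the triangle inequality, and has $d(x,x)=0$. The profile $\vec\sigma$ is $\alpha$-consistent with $d$ (mandatory elicitation) if for every agent $i$ and every $j\in[m-1]$: - if $\Join_i(j)=\,\succ$, then $d(i,\pi_i(j+1))\ge d(i,\pi_i(j))>\alpha\, d(i,\pi_i(j+1))$; - if $\Join_i(j)=\,\succ\!\!\succ$, then $d(i,\pi_i(j))\le\alpha\, d(i,\pi_i(j+1))$. Let $\mathrm{sc}_d(a)=\sum_{i\in N}d(i,a)$ and $\mathsf{dist}_\alpha(a,\mathcal E)=\sup_d \mathrm{sc}_d(a)/\min_{b\in A}\mathrm{sc}_d(b)$, the supremum over metrics $d$ with which $\vec\sigma$ is $\alpha$-consistent.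 A preference $\sigma=(\pi,\Join)$ is moderate-up-to-$k$ if $\Join(k+1)=\,\succ\!\!\succ$ and $\Join(i)=\,\succ$ for all $i\in[k]$. If $\Join$ contains no $\succ\!\!\succ$, the preference is moderate-up-to-$(m-1)$. A profile is moderate-up-to-$k$ if every agent's preference is. Define - $w_1=\frac{\alpha+1}{3\alpha+1}$ and $t_1=\frac{1-\alpha}{3\alpha+1}$; - for $k>1$: $w_k=1-\frac{2\alpha}{(1-\alpha)t_{k-1}+2w_{k-1}+2\alpha}$ and $t_k=w_k+(1-w_k)t_{k-1}$. *)

(* Defs.v *)
From HB Require Import structures.
From mathcomp Require Import all_boot all_order all_algebra all_fingroup.
From mathcomp Require Import all_classical all_reals ereal.
Set Implicit Arguments. Unset Strict Implicit. Unset Printing Implicit Defensive.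
Import Order.TTheory GRing.Theory Num.Theory.
Local Open Scope ring_scope.
Local Open Scope classical_set_scope.

(* Positions in a ranking are
   0-based: pi 0 is the most preferred alternative (paper's pi(1)),
   and the separator at 0-based index j : 'I_(m-1) sits between positions
   j and j+1 (paper's Join(j+1)). *)
Inductive intensity := Weak | Strong .

Record pref (m : nat) := Pref {
  ranking : {perm 'I_m};            (* position -> alternative, bijection *)
  join : 'I_(m - 1) -> intensity }.

Definition profile (m n : nat) := 'I_n -> pref m.

Definition point (n m : nat) := ('I_n + 'I_m)%type.

Definition is_metric (R : realType) (T : Type) (d : T -> T -> R) : Prop :=
  (forall x y, 0 <= d x y) /\ (forall x y, d x y = d y x) /\
  (forall x, d x x = 0) /\ (forall x y z, d x z <= d x y + d y z).

Definition consistent (R : realType) (alpha : R) (m n : nat)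
    (sigma : profile m n) (d : point n m -> point n m -> R) : Prop :=
  forall (i : 'I_n) (j : 'I_(m - 1)) (p q : 'I_m),
    val p = val j -> val q = (val j).+1 ->
    let dp := d (inl i) (inr (ranking (sigma i) p)) in
    let dq := d (inl i) (inr (ranking (sigma i) q)) in
    match join (sigma i) j with
    | Weak => dq >= dp /\ dp > alpha * dq
    | Strong => dp <= alpha * dq
    end.

Definition sc (R : realType) (n m : nat) (d : point n m -> point n m -> R)
    (a : 'I_m) : R := \sum_(i < n) d (inl i) (inr a).

(* min_{b in A} sc_d(b); the fold starts at sc_d(a), which is itself one of
   the values, so this is exactly the minimum over A. *)
Definition sc_min (R : realType) (n m : nat) (d : point n m -> point n m -> R)
    (a : 'I_m) : R := \big[Order.min/sc d a]_(b : 'I_m) sc d b.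

Definition distortion (R : realType) (alpha : R) (m n : nat)
    (sigma : profile m n) (a : 'I_m) : \bar R :=
  ereal_sup [set ((sc d a / sc_min d a)%:E) | d in
             [set d : point n m -> point n m -> R |
                is_metric d /\ consistent alpha sigma d]].

(* moderate-up-to-k, k is the paper's k (1-based positions) *)
Definition moderate_pref (m : nat) (k : nat) (s : pref m) : Prop :=
  (forall j : 'I_(m - 1), (val j < k)%N -> join s j = Weak) /\
  (forall j : 'I_(m - 1), val j = k -> join s j = Strong).

Definition moderate_profile (m n k : nat) (sigma : profile m n) : Prop :=
  forall i, moderate_pref k (sigma i).

(* (w_k, t_k); index 0 is a dummy, index k >= 1 is the paper's (w_k, t_k). *)
Fixpoint wt (R : realType) (alpha : R) (k : nat) : R * R :=
  match k with
  | 0 => (0, 0)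
  | k'.+1 =>
    match k' with
    | 0 => ((alpha + 1) / (3 * alpha + 1), (1 - alpha) / (3 * alpha + 1))
    | _ => let p := wt alpha k' in
           let w := 1 - 2 * alpha / ((1 - alpha) * p.2 + 2 * p.1 + 2 * alpha) in
           (w, w + (1 - w) * p.2)
    end
  end.

Definition w_ (R : realType) (alpha : R) (k : nat) : R := (wt alpha k).1.
Definition t_ (R : realType) (alpha : R) (k : nat) : R := (wt alpha k).2.

(* Main.v *)
Require Import Defs.
From HB Require Import structures.
From mathcomp Require Import all_boot all_order all_algebra all_fingroup.
From mathcomp Require Import all_classical all_reals ereal.
From mathcomp Require Import lra zify ring.
Require Import Defs.
Import Order.TTheory GRing.Theory Num.Theory.
Local Open Scope ring_scope.

Set Implicit Arguments. Unset Strict Implicit. Unset Printing Implicit Defensive.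

Fixpoint WT (R : realType) (alpha : R) (k : nat) : R * R :=
  match k with
  | 0 => (1, -1)
  | k'.+1 => let p := WT alpha k' in
      let w := 1 - 2 * alpha / ((1 - alpha) * p.2 + 2 * p.1 + 2 * alpha) in
      (w, w + (1 - w) * p.2)
  end.
Definition W (R : realType) (alpha : R) k := (WT alpha k).1.
Definition T (R : realType) (alpha : R) k := (WT alpha k).2.
Definition Dn (R : realType) (alpha : R) k :=
  (1 - alpha) * T alpha k + 2 * W alpha k + 2 * alpha.

Lemma WS (R : realType) (alpha : R) k : W alpha k.+1 = 1 - 2 * alpha / Dn alpha k.
Proof. by []. Qed.
Lemma TS (R : realType) (alpha : R) k :
  T alpha k.+1 = W alpha k.+1 + (1 - W alpha k.+1) * T alpha k.
Proof. by []. Qed.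

Lemma Dn_pos (R : realType) (alpha : R) k : 0 <= alpha -> alpha <= 1 ->
  T alpha k <= 1 -> 1 <= T alpha k + 2 * W alpha k -> 1 + alpha <= Dn alpha k.
Proof.
move=> ha0 ha1 t1 e1.
have hat : alpha * T alpha k <= alpha by nra.
rewrite /Dn; lra.
Qed.

Lemma inv (R : realType) (alpha : R) k : 0 <= alpha -> alpha <= 1 ->
  [/\ 0 <= W alpha k <= 1, -1 <= T alpha k <= 1 & 1 <= T alpha k + 2 * W alpha k].
Proof.
move=> ha0 ha1.
elim: k => [|k [/andP[w0 w1] /andP[t0 t1] e1]].
  by rewrite /W /T /=; split; lra.
have hD := Dn_pos ha0 ha1 t1 e1.
have hD0 : 0 < Dn alpha k by lra.
rewrite TS WS.
set D := Dn alpha k in hD hD0 *.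
set u := 2 * alpha / D.
have hu : u * D = 2 * alpha by rewrite /u mulfVK // (gt_eqF hD0).
have u0 : 0 <= u by rewrite /u divr_ge0 //; lra.
have u1 : u <= 1.
  rewrite /u ler_pdivrMr // mul1r /D /Dn.
  have hat : alpha * T alpha k <= alpha by nra.
  lra.
have u2 : u * (3 - T alpha k) <= 2.
  rewrite /u mulrAC ler_pdivrMr // /D /Dn.
  have hat : alpha * T alpha k <= alpha by nra.
  nra.
split; [apply/andP; split|apply/andP; split|]; nra.
Qed.
Fixpoint P (R : realType) (alpha : R) (k s : nat) : R :=
  match k, s with
  | 0, 0 => 1
  | 0, _ => 0
  | k'.+1, 0 => W alpha k'.+1
  | k'.+1, s'.+1 => (1 - W alpha k'.+1) * P alpha k' s'
  end.

Lemma P_ge0 (R : realType) (alpha : R) k s : 0 <= alpha -> alpha <= 1 -> 0 <= P alpha k s.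
Proof.
move=> ha0 ha1.
elim: k s => [|k IH] [|s] //=.
- by case: (inv k.+1 ha0 ha1) => /andP[].
- by case: (inv k.+1 ha0 ha1) => /andP[? ?] _ _; rewrite mulr_ge0 // ?subr_ge0.
Qed.

Lemma P_out (R : realType) (alpha : R) k s : (k < s)%N -> P alpha k s = 0.
Proof.
elim: k s => [|k IH] [|s] //= hs.
by rewrite IH ?mulr0.
Qed.

Lemma sumP (R : realType) (alpha : R) k N : (k < N)%N -> \sum_(s < N) P alpha k s = 1.
Proof.
elim: k N => [|k IH] [|N] // hN.
  by rewrite big_ord_recl /= big1 ?addr0.
rewrite big_ord_recl /= -mulr_sumr IH //; lra.
Qed.
Lemma sum_shift (R : realType) (alpha : R) k N (f : nat -> R) :
  \sum_(s < N.+1) P alpha k.+1 s * f s =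
  W alpha k.+1 * f 0%N + (1 - W alpha k.+1) * \sum_(s < N) P alpha k s * f s.+1.
Proof.
rewrite big_ord_recl /= mulr_sumr; congr (_ + _); apply: eq_bigr => i _.
by rewrite mulrA.
Qed.

Lemma sum_shift0 (R : realType) (alpha : R) N (f : nat -> R) :
  \sum_(s < N.+1) P alpha 0 s * f s = f 0%N.
Proof.
by rewrite big_ord_recl /= big1 ?addr0 ?mul1r // => i _; rewrite mul0r.
Qed.

Lemma step_ineq (R : realType) (alpha : R) k x0 x1 : 0 <= alpha -> alpha <= 1 ->
  0 <= x1 -> alpha * x1 <= x0 ->
  (1 - W alpha k.+1) * ((T alpha k + 2 * W alpha k) * x1) <=
  (T alpha k.+1 + W alpha k.+1) * x0.
Proof.
move=> ha0 ha1 hx1 hx.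
case: (inv k ha0 ha1) => /andP[w0 w1] /andP[t0 t1] e1.
have hD := Dn_pos ha0 ha1 t1 e1.
have hD0 : 0 < Dn alpha k by lra.
rewrite TS WS.
set D := Dn alpha k in hD hD0 *.
set u := 2 * alpha / D.
have hu : u * D = 2 * alpha by rewrite /u mulfVK // (gt_eqF hD0).
have -> : 1 - (1 - u) = u by ring.
set e := T alpha k + 2 * W alpha k.
have hc : (1 - u + u * T alpha k + (1 - u)) * D = 2 * e.
  have -> : (1 - u + u * T alpha k + (1 - u)) * D = 2 * D - 2 * (u * D) + T alpha k * (u * D) by ring.
  by rewrite hu /D /Dn /e; ring.
rewrite -(ler_pM2r hD0).
have -> : u * (e * x1) * D = e * x1 * (u * D) by ring.
rewrite hu.
have -> : (1 - u + u * T alpha k + (1 - u)) * x0 * D = 2 * e * x0 by rewrite mulrAC hc.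
have he : 0 <= e by rewrite /e; lra.
have := ler_wpM2l he hx.
have -> : e * x1 * (2 * alpha) = 2 * (e * (alpha * x1)) by ring.
have -> : 2 * e * x0 = 2 * (e * x0) by ring.
move=> h; lra.
Qed.
Definition chain (R : realType) (alpha : R) (k : nat) (x : nat -> R) :=
  forall s, (s < k)%N -> x s <= x s.+1 /\ alpha * x s.+1 <= x s.

Lemma chain_mono (R : realType) (alpha : R) k x s t :
  chain alpha k x -> (s <= t)%N -> (t <= k)%N -> x s <= x t.
Proof.
move=> hc hst; elim: t hst => [|t IH] hst htk.
  by move: hst; rewrite leqn0 => /eqP ->.
move: hst; rewrite leq_eqVlt => /orP[/eqP -> //|hst].
apply: le_trans (IH hst (ltnW htk)) _.
by case: (hc t htk).
Qed.

Lemma chain_S (R : realType) (alpha : R) k x :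
  chain alpha k.+1 x -> chain alpha k (fun s => x s.+1).
Proof. by move=> hc s hs; apply: hc. Qed.

Lemma Ebound (R : realType) (alpha : R) k N (x : nat -> R) :
  0 <= alpha -> alpha <= 1 -> (k < N)%N -> (forall s, 0 <= x s) ->
  chain alpha k x ->
  \sum_(s < N) P alpha k s * x s <= (T alpha k + 2 * W alpha k) * x 0%N.
Proof.
move=> ha0 ha1; elim: k N x => [|k IH] [|N] x // hN hx hc.
  by rewrite sum_shift0 /T /W /=; lra.
rewrite sum_shift.
have h1 := IH N (fun s => x s.+1) hN (fun s => hx s.+1) (chain_S hc).
case: (inv k.+1 ha0 ha1) => /andP[w0 w1] _ _.
have h2 := @step_ineq R alpha k (x 0%N) (x 1%N) ha0 ha1 (hx 1%N) (proj2 (hc 0%N isT)).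
have h3 : (1 - W alpha k.+1) * (\sum_(s < N) P alpha k s * x s.+1) <=
   (1 - W alpha k.+1) * ((T alpha k + 2 * W alpha k) * x 1%N).
  by apply: ler_wpM2l => //; rewrite subr_ge0.
lra.
Qed.

Lemma Kbound (R : realType) (alpha : R) k N (x z : nat -> R) r :
  0 <= alpha -> alpha <= 1 -> (k < N)%N -> (r <= k)%N -> (forall s, 0 <= x s) ->
  chain alpha k x -> (forall s, z s <= x r + x s) -> z r = 0 ->
  \sum_(s < N) P alpha k s * z s <= (1 + T alpha k) * x r.
Proof.
move=> ha0 ha1; elim: k N x z r => [|k IH] [|N] x z r // hN hr hx hc hz hzr.
  move: hr; rewrite leqn0 => /eqP hr; subst r.
  by rewrite sum_shift0 hzr /T /=; lra.
rewrite sum_shift.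
case: (inv k.+1 ha0 ha1) => /andP[w0 w1] _ _.
have u0 : 0 <= 1 - W alpha k.+1 by rewrite subr_ge0.
case: r hr hz hzr => [|r] hr hz hzr.
  rewrite hzr mulr0 add0r.
  have h1 : \sum_(s < N) P alpha k s * z s.+1 <=
            \sum_(s < N) P alpha k s * (x 0%N + x s.+1).
    apply: ler_sum => i _; apply: ler_wpM2l; first exact: P_ge0.
    exact: hz.
  have h2 : \sum_(s < N) P alpha k s * (x 0%N + x s.+1) =
            x 0%N + \sum_(s < N) P alpha k s * x s.+1.
    under eq_bigr do rewrite mulrDr.
    by rewrite big_split /= -mulr_suml sumP // mul1r.
  have h3 := @Ebound R alpha k N (fun s => x s.+1) ha0 ha1 hN (fun s => hx s.+1) (chain_S hc).
  have h4 := @step_ineq R alpha k (x 0%N) (x 1%N) ha0 ha1 (hx 1%N) (proj2 (hc 0%N isT)).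
  have h5 : (1 - W alpha k.+1) * (\sum_(s < N) P alpha k s * z s.+1) <=
     (1 - W alpha k.+1) * (x 0%N + (T alpha k + 2 * W alpha k) * x 1%N).
    apply: ler_wpM2l => //; apply: le_trans h1 _; rewrite h2; lra.
  lra.
have h1 := IH N (fun s => x s.+1) (fun s => z s.+1) r hN hr (fun s => hx s.+1)
   (chain_S hc) (fun s => hz s.+1) hzr.
have h0 : z 0%N <= 2 * x r.+1.
  have := hz 0%N; have := chain_mono hc (isT : (0 <= r.+1)%N) hr; lra.
have h5 : (1 - W alpha k.+1) * (\sum_(s < N) P alpha k s * z s.+1) <=
     (1 - W alpha k.+1) * ((1 + T alpha k) * x r.+1).
  exact: ler_wpM2l.
have h6 : W alpha k.+1 * z 0%N <= W alpha k.+1 * (2 * x r.+1) by apply: ler_wpM2l.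
rewrite TS.
have -> : (1 + (W alpha k.+1 + (1 - W alpha k.+1) * T alpha k)) * x r.+1 =
   W alpha k.+1 * (2 * x r.+1) + (1 - W alpha k.+1) * ((1 + T alpha k) * x r.+1) by ring.
lra.
Qed.

Lemma Obound (R : realType) (alpha : R) k N (x z : nat -> R) y :
  0 <= alpha -> alpha <= 1 -> (k < N)%N ->
  (forall s, (s <= k)%N -> x s <= alpha * y) -> (forall s, z s <= y + x s) ->
  \sum_(s < N) P alpha k s * z s <= (1 + alpha) * y.
Proof.
move=> ha0 ha1 hN hx hz.
apply: le_trans (_ : \sum_(s < N) P alpha k s * ((1 + alpha) * y) <= _).
  apply: ler_sum => i _.
  case: (leqP i k) => hik.
    apply: ler_wpM2l; first exact: P_ge0.
    have := hz i; have := hx i hik; lra.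
  by rewrite P_out // !mul0r.
by rewrite -mulr_suml sumP // mul1r.
Qed.
Definition cnt (R : realType) (I : finType) (f : I -> R) : nat :=
  (\sum_(i : I) nat_of_bool (f i != 0%R))%N.

Lemma cnt_D1 (R : realType) (I : finType) (f : I -> R) c :
  cnt f = ((f c != 0%R) + \sum_(i | i != c) nat_of_bool (f i != 0%R))%N.
Proof. by rewrite /cnt (bigD1 c). Qed.

Lemma cnt_upd (R : realType) (I : finType) (f : I -> R) c y :
  cnt (fun i => if i == c then y else f i) =
  ((y != 0%R) + \sum_(i | i != c) nat_of_bool (f i != 0%R))%N.
Proof.
rewrite (cnt_D1 _ c) eqxx; congr (_ + _)%N.
by apply: eq_bigr => i /negPf ->.
Qed.

Lemma sum_upd (R : realType) (I : finType) (f : I -> R) c y :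
  \sum_i (if i == c then y else f i) = \sum_i f i - f c + y.
Proof.
rewrite (bigD1 c) //= eqxx [X in _ = X - _ + _](bigD1 c) //=.
have -> : \sum_(i | i != c) (if i == c then y else f i) = \sum_(i | i != c) f i.
  by apply: eq_bigr => i /negPf ->.
ring.
Qed.

Lemma sum_if1 (R : realType) (I : finType) (c : I) (d : R) :
  \sum_(x : I) (if x == c then d else 0) = d.
Proof. by rewrite (bigD1 c) //= eqxx big1 ?addr0 // => x /negPf ->. Qed.

Lemma term_le_sum (R : realType) (I : finType) (F : I -> R) i :
  (forall x, 0 <= F x) -> F i <= \sum_x F x.
Proof. by move=> h; rewrite (bigD1 i) //= lerDl sumr_ge0. Qed.

Definition veto_concl (R : realType) (n m : nat) (pos : 'I_n -> 'I_m -> nat)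
  (s : 'I_m -> R) (b : 'I_n -> R) :=
  exists a, exists v : 'I_n -> 'I_m -> R,
   [/\ forall j c, 0 <= v j c, forall j, \sum_c v j c = b j,
       forall c, \sum_j v j c = s c,
       forall j c, v j c != 0 -> (pos j a <= pos j c)%N
     & (exists c, 0 < s c) -> 0 < s a].

Lemma veto_zero (R : realType) (n m : nat) (a0 : 'I_m) (pos : 'I_n -> 'I_m -> nat)
  (s : 'I_m -> R) (b : 'I_n -> R) :
  (forall j, b j = 0) -> (forall c, 0 <= s c) -> \sum_c s c = \sum_j b j ->
  veto_concl pos s b.
Proof.
move=> hb0 hs hsum.
have hs0 : forall c, s c = 0.
  move=> c; apply: (psumr_eq0P (P := predT)) => //.
  by rewrite hsum big1.
exists a0, (fun _ _ => 0); split => //.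
- by move=> j; rewrite big1 ?hb0.
- by move=> c; rewrite big1 ?hs0.
- by move=> j c; rewrite eqxx.
- by case=> c; rewrite hs0 ltxx.
Qed.
Lemma veto (R : realType) (n m : nat) (a0 : 'I_m) (pos : 'I_n -> 'I_m -> nat) :
  forall N (s : 'I_m -> R) (b : 'I_n -> R),
  (cnt s + cnt b <= N)%N ->
  (forall c, 0 <= s c) -> (forall j, 0 <= b j) -> \sum_c s c = \sum_j b j ->
  veto_concl pos s b.
Proof.
elim=> [|N IH] s b hmu hs hb hsum.
  case: (pickP (fun j => b j != 0)) => [j hj|hb0].
    exfalso; move: hmu; rewrite (cnt_D1 b j) hj; lia.
  by apply: (veto_zero a0 pos _ hs hsum) => j; apply/eqP; move/negbT: (hb0 j); rewrite negbK.
case: (pickP (fun j => b j != 0)) => [j hj|hb0]; last first.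
  by apply: (veto_zero a0 pos _ hs hsum) => j; apply/eqP; move/negbT: (hb0 j); rewrite negbK.
have hbj : 0 < b j by rewrite lt_def hj hb.
have [c0 hc0] : exists c0, 0 < s c0.
  case: (pickP (fun c => 0 < s c)) => [c0 hc0|hn]; first by exists c0.
  exfalso.
  have hs0 : \sum_c s c = 0.
    rewrite big1 // => c _; apply/eqP; rewrite eq_le hs andbT.
    by rewrite leNgt hn.
  have := term_le_sum j hb; rewrite -hsum hs0; lra.
have [c hc hmax] : exists2 c, 0 < s c &
    forall c', 0 < s c' -> (pos j c' <= pos j c)%N.
  case: (@arg_maxnP _ c0 (fun c => 0 < s c) (pos j) hc0) => c hc hm.
  by exists c.
set dl := Num.min (b j) (s c).
have hdl0 : 0 < dl by rewrite lt_min hbj hc.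
have hdlb : dl <= b j by rewrite ge_min lexx.
have hdls : dl <= s c by rewrite ge_min lexx orbT.
set s' := fun x => if x == c then s c - dl else s x.
set b' := fun x => if x == j then b j - dl else b x.
have hs' : forall x, 0 <= s' x.
  by move=> x; rewrite /s'; case: (x == c) => //; rewrite subr_ge0.
have hb' : forall x, 0 <= b' x.
  by move=> x; rewrite /b'; case: (x == j) => //; rewrite subr_ge0.
have hsum' : \sum_x s' x = \sum_x b' x.
  rewrite /s' /b' !sum_upd hsum; ring.
have hmu' : (cnt s' + cnt b' <= N)%N.
  move: hmu; rewrite /s' /b' !cnt_upd (cnt_D1 s c) (cnt_D1 b j) hj (gt_eqF hc).
  have : (s c - dl == 0) || (b j - dl == 0).
    rewrite !subr_eq0; case: (leP (b j) (s c)) => h.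
      by rewrite /dl (min_idPl h) eqxx orbT.
    by rewrite /dl (min_idPr (ltW h)) eqxx.
  case/orP => /eqP ->; rewrite eqxx /=;
  case: (s c - dl != 0); case: (b j - dl != 0) => /=; lia.
have [a [v' [hv0 hrow hcol hpos hpa]]] := IH s' b' hmu' hs' hb' hsum'.
case: (pickP (fun x => 0 < s' x)) => [x hx|hn].
  have hsa : 0 < s a.
    have := hpa (ex_intro _ x hx); rewrite /s'; case: eqP => [->|_] //; lra.
  exists a, (fun j' c' => v' j' c' + (if (j' == j) && (c' == c) then dl else 0)).
  split.
  - move=> j' c'; rewrite addr_ge0 //; case: ifP => _ //; exact: ltW.
  - move=> j'; rewrite big_split /= hrow /b'.
    case: (eqVneq j' j) => [->|hne] /=.
      by rewrite sum_if1; ring.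
    by rewrite big1 ?addr0.
  - move=> c'; rewrite big_split /= hcol /s'.
    case: (eqVneq c' c) => [->|hne] /=.
      under eq_bigr do rewrite andbT.
      by rewrite sum_if1; ring.
    by rewrite big1 ?addr0 // => j' _; rewrite andbF.
  - move=> j' c'; case: (boolP ((j' == j) && (c' == c))) => [/andP[/eqP -> /eqP ->] _|_].
      exact: hmax.
    by rewrite addr0; apply: hpos.
  - by move=> _.
have hs'0 : forall x, s' x = 0.
  move=> x; apply/eqP; rewrite eq_le hs' andbT leNgt; by rewrite hn.
have hv'0 : forall j' c', v' j' c' = 0.
  move=> j' c'; apply/eqP; rewrite eq_le hv0 andbT -(hs'0 c') -hcol.
  exact: (term_le_sum j' (fun x => hv0 x c')).
exists c, (fun j' c' => v' j' c' + (if (j' == j) && (c' == c) then dl else 0)).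
split.
- move=> j' c'; rewrite addr_ge0 //; case: ifP => _ //; exact: ltW.
- move=> j'; rewrite big_split /= hrow /b'.
  case: (eqVneq j' j) => [->|hne] /=.
    by rewrite sum_if1; ring.
  by rewrite big1 ?addr0.
- move=> c'; rewrite big_split /= hcol /s'.
  case: (eqVneq c' c) => [->|hne] /=.
    under eq_bigr do rewrite andbT.
    by rewrite sum_if1; ring.
  by rewrite big1 ?addr0 // => j' _; rewrite andbF.
- move=> j' c'; rewrite hv'0 add0r.
  by case: (boolP ((j' == j) && (c' == c))) => [/andP[/eqP -> /eqP ->] _|_]; rewrite ?eqxx.
- by move=> _.
Qed.
Definition xs (R : realType) (m n : nat) (sigma : profile m.+1 n)
  (d : point n m.+1 -> point n m.+1 -> R) (i : 'I_n) (s : nat) : R :=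
  d (inl i) (inr (ranking (sigma i) (inord s))).

Lemma cons_step (R : realType) (alpha : R) (m n : nat) (sigma : profile m.+1 n)
  (d : point n m.+1 -> point n m.+1 -> R) i (j : 'I_(m.+1 - 1)) :
  0 <= alpha -> alpha <= 1 -> is_metric d -> consistent alpha sigma d ->
  [/\ xs sigma d i j <= xs sigma d i j.+1,
      join (sigma i) j = Weak -> alpha * xs sigma d i j.+1 <= xs sigma d i j &
      join (sigma i) j = Strong -> xs sigma d i j <= alpha * xs sigma d i j.+1].
Proof.
move=> ha0 ha1 [hpos [hsym [hxx htri]]] hc.
have hj : (nat_of_ord j < m)%N by case: j => jv /=; lia.
have h1 : (nat_of_ord j < m.+1)%N := ltnW hj.
have h2 : ((nat_of_ord j).+1 < m.+1)%N := hj.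
have := hc i j (inord j) (inord j.+1) (inordK h1) (inordK h2).
rewrite /xs /=.
set dp := d (inl i) (inr (ranking (sigma i) (inord j))).
set dq := d (inl i) (inr (ranking (sigma i) (inord j.+1))).
have hq : 0 <= dq by apply: hpos.
case: (join (sigma i) j) => [[h3 h4]|h3]; split => //.
- by move=> _; exact: ltW.
- nra.
Qed.

Lemma xs_ge0 (R : realType) (m n : nat) (sigma : profile m.+1 n)
  (d : point n m.+1 -> point n m.+1 -> R) i s :
  is_metric d -> 0 <= xs sigma d i s.
Proof. by case=> hpos _; apply: hpos. Qed.

Lemma xs_mono (R : realType) (alpha : R) (m n : nat) (sigma : profile m.+1 n)
  (d : point n m.+1 -> point n m.+1 -> R) i s t :
  0 <= alpha -> alpha <= 1 -> is_metric d -> consistent alpha sigma d ->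
  (s <= t)%N -> (t <= m)%N -> xs sigma d i s <= xs sigma d i t.
Proof.
move=> ha0 ha1 hm hc; elim: t => [|t IH] hst htm.
  by move: hst; rewrite leqn0 => /eqP ->.
move: hst; rewrite leq_eqVlt => /orP[/eqP -> //|hst].
apply: le_trans (IH hst (ltnW htm)) _.
have hj : (t < m.+1 - 1)%N by lia.
by case: (@cons_step R alpha m n sigma d i (Ordinal hj) ha0 ha1 hm hc).
Qed.

Lemma xs_pos (R : realType) (m n : nat) (sigma : profile m.+1 n)
  (d : point n m.+1 -> point n m.+1 -> R) i c :
  xs sigma d i (nat_of_ord (((ranking (sigma i))^-1)%g c)) = d (inl i) (inr c).
Proof. by rewrite /xs inord_val permKV. Qed.
Definition posi (m n : nat) (sigma : profile m.+1 n) (i : 'I_n) (c : 'I_m.+1) : nat :=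
  nat_of_ord (((ranking (sigma i))^-1)%g c).

Lemma agent_bound (R : realType) (alpha : R) (m n : nat) (sigma : profile m.+1 n)
  (d : point n m.+1 -> point n m.+1 -> R) (i : 'I_n) k (b : 'I_m.+1) :
  0 <= alpha -> alpha <= 1 -> is_metric d -> consistent alpha sigma d ->
  (k <= m)%N -> moderate_pref k (sigma i) ->
  \sum_(c : 'I_m.+1) P alpha k (posi sigma i c) * d (inr b) (inr c) <=
  (1 + Num.max alpha (T alpha k)) * d (inl i) (inr b).
Proof.
move=> ha0 ha1 hm hc hkm [hweak hstrong].
have hm' := hm; case: hm' => [hpos [hsym [hxx htri]]].
set pi := ranking (sigma i).
rewrite (reindex_inj (@perm_inj _ pi)) /=.
have -> : \sum_(t : 'I_m.+1) P alpha k (posi sigma i (pi t)) * d (inr b) (inr (pi t)) =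
   \sum_(s < m.+1) P alpha k s * d (inr b) (inr (pi (inord s))).
  apply: eq_bigr => t _; rewrite /posi -/pi permK inord_val //.
set z := fun s : nat => d (inr b) (inr (pi (inord s))).
set x := xs sigma d i.
set r := posi sigma i b.
have hxr : x r = d (inl i) (inr b) by rewrite /x /r /posi xs_pos.
have hrm : (r <= m)%N by rewrite /r /posi; have := ltn_ord ((pi^-1)%g b).
have hx0 : forall s, 0 <= x s by move=> s; apply: xs_ge0.
have hz : forall s, z s <= x r + x s.
  move=> s; rewrite hxr /z /x /xs -/pi.
  apply: le_trans (htri _ (inl i) _) _.
  by rewrite hsym.
have hch : chain alpha k x.
  move=> s hs.
  have hj : (s < m.+1 - 1)%N by lia.
  case: (@cons_step R alpha m n sigma d i (Ordinal hj) ha0 ha1 hm hc) => h1 h2 _.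
  split => //; apply: h2; exact: hweak.
have hb0 : 0 <= d (inl i) (inr b) by [].
rewrite -hxr.
case: (leqP r k) => hrk.
  have hzr : z r = 0 by rewrite /z /r /posi inord_val permKV hxx.
  apply: le_trans (Kbound ha0 ha1 (_ : (k < m.+1)%N) hrk hx0 hch hz hzr) _ => //.
  apply: ler_wpM2r => //; rewrite lerD2l le_max lexx orbT //.
have hk : (k < m.+1 - 1)%N by lia.
case: (@cons_step R alpha m n sigma d i (Ordinal hk) ha0 ha1 hm hc) => _ _ h3.
have hs3 := h3 (hstrong (Ordinal hk) erefl).
have hmono : x k.+1 <= x r := xs_mono i ha0 ha1 hm hc hrk hrm.
have hxo : forall s, (s <= k)%N -> x s <= alpha * x r.
  move=> s hs.
  have := xs_mono i ha0 ha1 hm hc hs hkm.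
  rewrite -/x => h; apply: le_trans h _; apply: le_trans hs3 _.
  by apply: ler_wpM2l.
have hz' : forall s, z s <= x r + x s by [].
apply: le_trans (Obound ha0 ha1 (_ : (k < m.+1)%N) hxo hz') _ => //.
apply: ler_wpM2r => //; rewrite lerD2l le_max lexx //.
Qed.
Lemma sc_bound (R : realType) (alpha : R) (m n : nat) (sigma : profile m.+1 n)
  (d : point n m.+1 -> point n m.+1 -> R) k (a : 'I_m.+1) (v : 'I_n -> 'I_m.+1 -> R) :
  0 <= alpha -> alpha <= 1 -> is_metric d -> consistent alpha sigma d ->
  (k <= m)%N -> moderate_profile k sigma ->
  (forall j c, 0 <= v j c) -> (forall j, \sum_c v j c = 1) ->
  (forall c, \sum_j v j c = \sum_i P alpha k (posi sigma i c)) ->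
  (forall j c, v j c != 0 -> (posi sigma j a <= posi sigma j c)%N) ->
  forall b, sc d a <= (2 + Num.max alpha (T alpha k)) * sc d b.
Proof.
move=> ha0 ha1 hm hc hkm hmod hv0 hrow hcol hpos b.
have hm' := hm; case: hm' => [hdpos [hsym [hxx htri]]].
set beta := Num.max alpha (T alpha k).
rewrite /sc.
have e1 : \sum_(j < n) d (inl j) (inr a) =
   \sum_(j < n) \sum_c v j c * d (inl j) (inr a).
  by apply: eq_bigr => j _; rewrite -mulr_suml hrow mul1r.
have e2 : \sum_(j < n) \sum_c v j c * d (inl j) (inr a) <=
   \sum_(j < n) \sum_c v j c * (d (inl j) (inr b) + d (inr b) (inr c)).
  apply: ler_sum => j _; apply: ler_sum => c _.
  case: (eqVneq (v j c) 0) => [->|hne]; first by rewrite !mul0r.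
  apply: ler_wpM2l => //.
  apply: le_trans (htri _ (inr b) _).
  have := xs_mono j ha0 ha1 hm hc (hpos j c hne) (_ : (posi sigma j c <= m)%N).
  rewrite /posi !xs_pos; apply.
  by rewrite /posi; have := ltn_ord (((ranking (sigma j))^-1)%g c).
have e3 : \sum_(j < n) \sum_c v j c * (d (inl j) (inr b) + d (inr b) (inr c)) =
   \sum_(j < n) d (inl j) (inr b) +
   \sum_(i < n) \sum_c P alpha k (posi sigma i c) * d (inr b) (inr c).
  under eq_bigr do (under eq_bigr do rewrite mulrDr; rewrite big_split /=).
  rewrite big_split /=; congr (_ + _).
    by apply: eq_bigr => j _; rewrite -mulr_suml hrow mul1r.
  rewrite exchange_big /= [RHS]exchange_big /=.
  apply: eq_bigr => c _; rewrite -mulr_suml hcol mulr_suml //.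
have e4 : \sum_(i < n) \sum_c P alpha k (posi sigma i c) * d (inr b) (inr c) <=
   \sum_(i < n) (1 + beta) * d (inl i) (inr b).
  apply: ler_sum => i _; exact: agent_bound.
rewrite e1; apply: le_trans e2 _; rewrite e3.
apply: le_trans (lerD (lexx _) e4) _.
rewrite -mulr_sumr.
have : 0 <= \sum_(i < n) d (inl i) (inr b) by apply: sumr_ge0.
lra.
Qed.

Lemma dist_le (R : realType) (alpha : R) (m n : nat) (sigma : profile m n) (a : 'I_m)
  (c : R) : 1 <= c ->
  (forall d, is_metric d -> consistent alpha sigma d -> forall b, sc d a <= c * sc d b) ->
  (distortion alpha sigma a <= c%:E)%E.
Proof.
move=> hc1 H.
apply: ge_ereal_sup => _ [d [hm hcons] <-].
rewrite lee_fin.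
have hm' := hm; case: hm' => [hdpos _].
have hsc0 : forall b, 0 <= sc d b by move=> b; apply: sumr_ge0.
have [hmin hmin0] : sc d a <= c * sc_min d a /\ 0 <= sc_min d a.
  rewrite /sc_min; apply: (big_ind (fun x => sc d a <= c * x /\ 0 <= x)).
  - split => //; have := hsc0 a; nra.
  - move=> x y [hx1 hx2] [hy1 hy2]; rewrite minEle; by case: ifP.
  - move=> b _; split => //; exact: H.
case: (eqVneq (sc_min d a) 0) => [->|hne].
  rewrite invr0 mulr0; lra.
have hpos : 0 < sc_min d a by rewrite lt_def hne hmin0.
by rewrite ler_pdivrMr // mulrC.
Qed.
Definition Gstep (R : realType) (alpha : R) (p : R * R) : R * R :=
  let w := 1 - 2 * alpha / ((1 - alpha) * p.2 + 2 * p.1 + 2 * alpha) in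
  (w, w + (1 - w) * p.2).

Lemma WT_S (R : realType) (alpha : R) k : WT alpha k.+1 = Gstep alpha (WT alpha k).
Proof. by []. Qed.
Lemma wt_S (R : realType) (alpha : R) k : wt alpha k.+2 = Gstep alpha (wt alpha k.+1).
Proof. by []. Qed.

Lemma T_t (R : realType) (alpha : R) k : 0 <= alpha -> T alpha k.+1 = t_ alpha k.+1.
Proof.
move=> ha0; rewrite /T /t_; congr snd.
elim: k => [|k IH]; last by rewrite WT_S wt_S IH.
rewrite /=.
have -> : (1 - alpha) * -1 + 2 * 1 + 2 * alpha = 3 * alpha + 1 by ring.
have h3 : 3 * alpha + 1 != 0 by rewrite gt_eqF //; lra.
congr (_, _); field; exact: h3.
Qed.

Lemma uniq_k (m n : nat) (sigma : profile m.+1 n) k k0 :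
  (0 < n)%N -> (k <= m)%N -> (k0 <= m)%N ->
  moderate_profile k sigma -> moderate_profile k0 sigma -> k = k0.
Proof.
move=> hn hk hk0 hm1 hm2.
set i0 : 'I_n := Ordinal hn.
case: (ltngtP k k0) => // h.
- have hj : (k < m.+1 - 1)%N by lia.
  have := (proj1 (hm2 i0)) (Ordinal hj) h.
  by rewrite (proj2 (hm1 i0) (Ordinal hj) erefl).
- have hj : (k0 < m.+1 - 1)%N by lia.
  have := (proj1 (hm1 i0)) (Ordinal hj) h.
  by rewrite (proj2 (hm2 i0) (Ordinal hj) erefl).
Qed.

Unset Implicit Arguments.

Theorem theorem2 (R : realType) (m : nat) (alpha : R) :
  (2 <= m)%N -> 0 <= alpha <= 1 ->
  exists f : forall n : nat, profile m n -> 'I_m,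
    forall (k : nat), (1 <= k <= m - 1)%N ->
    forall (n : nat) (sigma : profile m n),
      moderate_profile k sigma ->
      (distortion alpha sigma (f n sigma) <= (2 + Num.max alpha (t_ alpha k))%:E)%E.
Proof.
case: m => [|m] // hm /andP[ha0 ha1].
have good : forall n (sigma : profile m.+1 n), exists a : 'I_m.+1,
    forall k, (1 <= k <= m.+1 - 1)%N -> moderate_profile k sigma ->
    (distortion alpha sigma a <= (2 + Num.max alpha (t_ alpha k))%:E)%E.
  move=> n sigma.
  case: (pselect (exists k, (1 <= k <= m.+1 - 1)%N /\ moderate_profile k sigma))
    => [[k0 [hk0 hmod0]]|hno]; last first.
    by exists ord0 => k hk hmod; exfalso; apply: hno; exists k.
  have hk0m : (k0 <= m)%N by lia.
  set s := fun c => \sum_(i < n) P alpha k0 (posi sigma i c).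
  have hs : forall c, 0 <= s c by move=> c; apply: sumr_ge0 => i _; exact: P_ge0.
  have hb : forall j : 'I_n, (0 : R) <= 1 by move=> _; exact: ler01.
  have hsum : \sum_c s c = \sum_(j < n) (1 : R).
    rewrite /s exchange_big /=; apply: eq_bigr => i _.
    rewrite (reindex_inj (@perm_inj _ (ranking (sigma i)))) /=.
    have -> : \sum_(t : 'I_m.+1) P alpha k0 (posi sigma i (ranking (sigma i) t)) =
       \sum_(t < m.+1) P alpha k0 t.
      by apply: eq_bigr => t _; rewrite /posi permK.
    by rewrite sumP.
  have [a [v [hv0 hrow hcol hpos _]]] :=
    @veto R n m.+1 ord0 (posi sigma) _ s (fun _ => 1) (leqnn _) hs hb hsum.
  exists a => k hk hmod.
  have hk1 : (1 <= k)%N by case/andP: hk.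
  have hkm : (k <= m)%N by lia.
  case: k hk1 hk hkm hmod => [//|k] _ hk hkm hmod.
  rewrite -T_t //.
  apply: dist_le.
    have h12 : (1 : R) <= 2 + alpha by move: ha0; clear; move=> ha0; lra.
    apply: le_trans h12 _.
    by rewrite lerD2l le_max lexx.
  move=> d hmet hcons b.
  case: (posnP n) => [n0|npos].
    rewrite /sc !big1 ?mulr0 // => i _; exfalso; case: i => iv; by rewrite n0.
  have ek : k.+1 = k0 := uniq_k npos hkm hk0m hmod hmod0.
  rewrite ek in hmod hkm *.
  exact: (sc_bound ha0 ha1 hmet hcons hkm hmod hv0 hrow hcol hpos).
exists (fun n sigma => proj1_sig (cid (good n sigma))).
move=> k hk n sigma hmod.
exact: (proj2_sig (cid (good n sigma)) k hk hmod).
Qed.
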